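(* Let $a$ and $b$ be coprime odd integers, let $\beta$ be a non-negative integer, and let $c$ and $d$ be odd positive integers. Then: 1) If $cd\in G_{(a,b)}(\beta)$, then $c\in G_{(a,b)}(\beta)$ and $d\in G_{(a,b)}(\beta)$. 2) If $\beta\geq2$, then $cd\in G_{(a,b)}(\beta)$ if and only if $c\in G_{(a,b)}(\beta)$ and $d\in G_{(a,b)}(\beta)$.
   Context: For coprime nonzero integers $a,b$ and an integer $\beta\geq0$, $G_{(a,b)}(\beta)$ is the set of positive integers $d$ such that $2^\beta d\mid(a^k+b^k)$ for some positive integer $k$. *)

(* Defs.v *)
From Stdlib Require Import ZArith Znumtheory.
Open Scope Z_scope.

Definition inG (a b : Z) (beta : nat) (d : Z) : Prop :=
  0 < d /\ exists k : nat, (1 <= k)%nat /\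
    (2 ^ Z.of_nat beta * d | a ^ Z.of_nat k + b ^ Z.of_nat k).

(* Main.v *)
Require Import Defs.
From Stdlib Require Import ZArith Znumtheory Lia.
Open Scope Z_scope.

Lemma S_ident (x y : Z) (n : nat) : exists s t,
  x^(Z.of_nat (S n)) - (-y)^(Z.of_nat (S n)) = (x+y)*s /\
  s = Z.of_nat (S n) * x^(Z.of_nat n) + (x+y)*t.
Proof.
  induction n as [|n IH].
  - exists 1, 0. change (Z.of_nat 1) with 1. change (Z.of_nat 0) with 0. rewrite !Z.pow_1_r, Z.pow_0_r. split; ring.
  - destruct IH as [s [t [H1 H2]]].
    exists (x*s + (-y)^(Z.of_nat (S n))), (x*t - s).
    rewrite (Nat2Z.inj_succ (S n)), !Z.pow_succ_r by lia.
    rewrite (Nat2Z.inj_succ n), !Z.pow_succ_r in * by lia.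
    remember (x ^ Z.of_nat n) as P eqn:HP. remember ((-y) ^ Z.of_nat n) as Q eqn:HQ.
    split.
    + transitivity (x * (x*P - -y*Q) + (-y)*Q*(x+y)); [ring|].
      rewrite H1. ring.
    + assert (E : -y*Q = x*P - (x+y)*s) by lia.
      rewrite E, H2. ring.
Qed.

Lemma odd_sum (x y e : Z) : 0 <= e -> Z.odd e = true ->
  exists s t, x^e + y^e = (x+y)*s /\ s = e * x^(e-1) + (x+y)*t.
Proof.
  intros He Ho.
  assert (He1 : 1 <= e).
  { destruct (Z.eq_dec e 0); [subst; discriminate|lia]. }
  destruct (S_ident x y (Z.to_nat (e-1))) as [s [t [H1 H2]]].
  replace (Z.of_nat (S (Z.to_nat (e-1)))) with e in * by lia.
  rewrite Z2Nat.id in H2 by lia.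
  rewrite Z.pow_opp_odd in H1 by (apply Z.odd_spec; auto).
  exists s, t. split; lia.
Qed.

Lemma odd_div (x y e : Z) : 0 <= e -> Z.odd e = true -> (x+y | x^e + y^e).
Proof.
  intros He Ho. destruct (odd_sum x y e He Ho) as [s [t [H1 _]]].
  rewrite H1. apply Z.divide_factor_l.
Qed.

Lemma lift (x y M d : Z) : 0 < d -> Z.odd d = true -> (M | x+y) -> (d | x+y) ->
  (M*d | x^d + y^d).
Proof.
  intros Hd Ho HM Hdd. destruct (odd_sum x y d ltac:(lia) Ho) as [s [t [H1 H2]]].
  rewrite H1. apply Z.divide_trans with ((x+y)*d).
  apply Z.mul_divide_mono_r; auto. apply Z.mul_divide_mono_l.
  rewrite H2. apply Z.divide_add_r.
  - apply Z.divide_mul_l, Z.divide_refl.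
  - apply Z.divide_mul_l; auto.
Qed.

Lemma four_odd (a b : Z) (k : nat) : Z.odd a = true -> Z.odd b = true ->
  (4 | a^(Z.of_nat k) + b^(Z.of_nat k)) -> Z.odd (Z.of_nat k) = true.
Proof.
  intros Ha Hb H.
  destruct (Z.odd (Z.of_nat k)) eqn:E; auto. exfalso.
  assert (Ev : Z.even (Z.of_nat k) = true) by (rewrite <- Z.negb_odd, E; auto).
  apply Z.even_spec in Ev. destruct Ev as [j Hj].
  rewrite Hj, (Z.mul_comm 2 j) in H. rewrite !Z.pow_mul_r, !Z.pow_2_r in H by lia.
  assert (Hj0 : 0 <= j) by lia.
  assert (Ou : Z.odd (a^j) = true).
  { destruct (Z.eq_dec j 0). subst. reflexivity. rewrite Z.odd_pow by lia. auto. }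
  assert (Ov : Z.odd (b^j) = true).
  { destruct (Z.eq_dec j 0). subst. reflexivity. rewrite Z.odd_pow by lia. auto. }
  apply Z.odd_spec in Ou, Ov. destruct Ou as [m Hm]. destruct Ov as [n Hn].
  rewrite Hm, Hn in H. destruct H as [q Hq].
  assert (Hq' : q*4 = 4*(m*m+m+n*n+n) + 2) by (rewrite <- Hq; ring).
  lia.
Qed.

Theorem proposition2p11 (a b : Z) (beta : nat) (c d : Z) :
  Z.gcd a b = 1 -> Z.odd a = true -> Z.odd b = true ->
  Z.odd c = true -> 0 < c -> Z.odd d = true -> 0 < d ->
  (inG a b beta (c * d) -> inG a b beta c /\ inG a b beta d) /\
  ((2 <= beta)%nat -> (inG a b beta (c * d) <-> inG a b beta c /\ inG a b beta d)).
Proof.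
  intros _ Ha Hb Hc Hc0 Hd Hd0.
  assert (P1 : inG a b beta (c * d) -> inG a b beta c /\ inG a b beta d).
  { intros [_ [k [Hk H]]]. split; split; auto; exists k; split; auto;
      eapply Z.divide_trans; try exact H.
    - rewrite Z.mul_assoc. apply Z.divide_factor_l.
    - rewrite (Z.mul_comm c d), Z.mul_assoc. apply Z.divide_factor_l. }
  split; auto. intros Hbeta. split; auto.
  intros [[_ [k1 [Hk1 H1]]] [_ [k2 [Hk2 H2]]]].
  assert (F : (4 | 2 ^ Z.of_nat beta)).
  { replace (Z.of_nat beta) with (2 + (Z.of_nat beta - 2)) by lia.
    rewrite Z.pow_add_r by lia. apply Z.divide_factor_l. }
  assert (O1 : Z.odd (Z.of_nat k1) = true).
  { apply (four_odd a b); auto. eapply Z.divide_trans; [exact F|].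
    eapply Z.divide_trans; [|exact H1]. apply Z.divide_factor_l. }
  assert (O2 : Z.odd (Z.of_nat k2) = true).
  { apply (four_odd a b); auto. eapply Z.divide_trans; [exact F|].
    eapply Z.divide_trans; [|exact H2]. apply Z.divide_factor_l. }
  remember (Z.of_nat k1) as K1 eqn:HK1. remember (Z.of_nat k2) as K2 eqn:HK2.
  remember (a ^ (K1*K2)) as x eqn:Hx. remember (b ^ (K1*K2)) as y eqn:Hy.
  assert (D1 : (2 ^ Z.of_nat beta * c | x + y)).
  { eapply Z.divide_trans; [exact H1|]. subst x y.
    rewrite !Z.pow_mul_r by lia. apply odd_div; auto; lia. }
  assert (D2 : (2 ^ Z.of_nat beta * d | x + y)).
  { eapply Z.divide_trans; [exact H2|]. subst x y.
    rewrite (Z.mul_comm K1 K2), !Z.pow_mul_r by lia. apply odd_div; auto; lia. }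
  assert (P1' : 1 <= K1*K2) by (apply (Z.mul_le_mono_nonneg 1 K1 1 K2); lia).
  assert (P2' : 1 <= K1*K2*d) by (apply (Z.mul_le_mono_nonneg 1 (K1*K2) 1 d); lia).
  split; [apply Z.mul_pos; lia|].
  exists (Z.to_nat (K1*K2*d)). split; [lia|].
  rewrite Z2Nat.id by lia.
  rewrite (Z.pow_mul_r a (K1*K2) d), (Z.pow_mul_r b (K1*K2) d) by lia. rewrite <- Hx, <- Hy.
  rewrite Z.mul_assoc. apply lift; [lia|exact Hd|exact D1|].
  eapply Z.divide_trans; [|exact D2]. apply Z.divide_factor_r.
Qed.
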